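(* On the good event $\mathcal E$ (defined in the context), for every integer $k$ with $C''\le k\le K$ and every policy $\pi$, $$\hat V_1^\pi(\mu;\tilde c^k,\hat P^k)\le V_1^\pi(\mu;c,P).$$
   Context: Episodic constrained MDP. $\mathcal S,\mathcal A$ finite, $H\ge1$ integer. For each $h\in[H]$, $(s,a)$: unknown transition distribution $P_h(\cdot\mid s,a)$, unknown mean reward $r_h(s,a)\in[0,1]$, unknown mean cost $c_h(s,a)\in[0,1]$. Known initial distribution $\mu$, threshold $\tau\in(0,H]$. Policies are randomized Markov. $V_h^\pi(s;g,P'):=\mathbb E_{P',\pi}[\sum_{t=h}^Hg_t(S_t,A_t)\mid S_h=s]$, $V_1^\pi(\mu;g,P'):=\mathbb E_{S_1\sim\mu}V_1^\pi(S_1;g,P')$. There exists a policy $\pi^0$ with $V_1^{\pi^0}(\mu;c,P)=c^0<\tau$, $c^0$ known. Interaction over $K$ episodes: in episode $k$, $\pi^k$ is $\mathcal F_{k-1}$-measurable; $S_1^k\sim\mu$, $A_h^k\sim\pi_h^k(\cdot\mid S_h^k)$, observed $R_h^k=r_h(S_h^k,A_h^k)+\text{noise}$, $C_h^k=c_h(S_h^k,A_h^k)+\text{noise}$, $S_{h+1}^k\sim P_h(\cdot\mid S_h^k,A_h^k)$; $\mathcal F_k$ generated by all observations of episodes $1..k$; noises conditionally independent, zero mean, $\mathbb E[e^{\lambda\xi}\mid\mathcal F_{k-1}]\le e^{\lambda^2/4}$ for all real $\lambda$. Here the policies are those of OptPess-PrimalDual: $\lambda^1=0$, $\pi^k\in\arg\max_\pi\hat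 V_1^\pi(\mu;\tilde r^k,\hat P^k)-\frac{\lambda^k}{\eta^k}(\hat V_1^\pi(\mu;\tilde c^k,\hat P^k)-\tau)$, $\lambda^{k+1}=(\lambda^k+\hat V_1^{\pi^k}(\mu;\tilde c^k,\hat P^k)+\epsilon_k-\tau)_+$, $\eta^k=(\tau-c^0)H\sqrt k$. Estimates: $N_h^k(s,a)$ = visits of $(s,a)$ at step $h$ in episodes $1..k-1$; $\hat P_h^k,\hat r_h^k,\hat c_h^k$ empirical transition frequencies and means (denominator $N_h^k(s,a)\vee1$); $\delta\in(0,1)$, $Z:=\log(16|\mathcal S|^2|\mathcal A|HK/\delta)$, $\beta_h^k(s,a):=\sqrt{Z/(N_h^k(s,a)\vee1)}$; $\tilde r_h^k:=\hat r_h^k+(1+H|\mathcal S|)\beta_h^k$, $\tilde c_h^k:=\hat c_h^k-(1+H|\mathcal S|)\beta_h^k$, $\underline c_h^k:=\hat c_h^k+(1+H|\mathcal S|)\beta_h^k$; $\hat V_1^\pi(\mu;\tilde r^k,\hat P^k):=\min\{H,V_1^\pi(\mu;\tilde r^k,\hat P^k)\}$, $\hat V_1^\pi(\mu;\tilde c^k,\hat P^k):=\max\{0,V_1^\pi(\mu;\tilde c^k,\hat P^k)\}$. $\delta'=\delta/(16|\mathcal S|^2|\mathcal A|H)$, $\epsilon_k=5H^2\sqrt{|\mathcal S|^3|\mathcal A|}(\log\frac{k}{\delta'}+1)/\sqrt{k\log\frac{k}{\delta'}}$, and $C''$ is the smallest positive integer such that $\epsilon_k\le(\tau-c^0)/2$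 for all $k\ge C''$. Good event: with $q^{\pi^k}(s,a,h):=\mathbb P(S_h^k=s,A_h^k=a\mid\mathcal F_{k-1})$, for events $\mathcal G_k\in\mathcal F_{k-1}$ and $\delta_0$, $\mathcal E_{\mathcal G}(\delta_0)$ is the event that for all $K'\in[K]$, with $K'_{\mathcal G}=\sum_{k\le K'}\mathbb 1(\mathcal G_k)$: $\sum_{k\le K'}\sum_h\sum_{s,a}\frac{\mathbb 1(\mathcal G_k)q^{\pi^k}(s,a,h)}{N_h^k(s,a)\vee1}\le4H|\mathcal S||\mathcal A|+2H|\mathcal S||\mathcal A|\ln K'_{\mathcal G}+4\ln\frac{2HK}{\delta_0}$ and $\sum_{k\le K'}\sum_h\sum_{s,a}\frac{\mathbb 1(\mathcal G_k)q^{\pi^k}(s,a,h)}{\sqrt{N_h^k(s,a)\vee1}}\le6H|\mathcal S||\mathcal A|+2H\sqrt{|\mathcal S||\mathcal A|K'_{\mathcal G}}+2H|\mathcal S||\mathcal A|\ln K'_{\mathcal G}+5\ln\frac{2HK}{\delta_0}$; $\mathcal E_\Omega$ uses $\mathcal G_k=\Omega$, $\mathcal E_0$ uses $\mathcal G_k=\{V_1^{\pi^0}(\mu;\underline c^k,\hat P^k)\ge(\tau+c^0)/2\}$. $\mathcal E$ is the event that for all $k,h,s,s',a$: $|r_h(s,a)-\hat r_h^k(s,a)|\le\beta_h^k(s,a)$, $|c_h(s,a)-\hat c_h^k(s,a)|\le\beta_h^k(s,a)$, $|\hat P_h^k(s'\mid s,a)-P_h(s'\mid s,a)|\le\beta_h^k(s,a)$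 and $|\hat P_h^k(s'\mid s,a)-P_h(s'\mid s,a)|\le\sqrt{\frac{2P_h(s'\mid s,a)Z}{N_h^k(s,a)\vee1}}+\frac{Z}{3(N_h^k(s,a)\vee1)}$, intersected with $\mathcal E_\Omega(\delta/4)\cap\mathcal E_0(\delta/4)$. *)

(* Defs.v *)
From HB Require Import structures.
From mathcomp Require Import all_boot all_order all_algebra.
From mathcomp Require Import reals exp.
Set Implicit Arguments. Unset Strict Implicit. Unset Printing Implicit Defensive.
Import Order.TTheory GRing.Theory Num.Theory.
Local Open Scope ring_scope.

(* Conventions: steps are 0-based, h = 0..H-1 (paper's h = 1..H);
   episodes are 1-based, k = 1..K.  Functions indexed by steps are total
   on nat; only h < H is ever used. *)

Section CMDP.
Variables (R : realType) (S A : finType) (H K : nat).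

Definition policy := nat -> S -> A -> R.     (* pi h s a = pi_h(a|s) *)
Definition kernel := nat -> S -> A -> S -> R. (* P h s a s' = P_h(s'|s,a) *)
Definition sfun := nat -> S -> A -> R.

Definition is_policy (pi : policy) : Prop :=
  forall h s, (h < H)%N -> (forall a, 0 <= pi h s a) /\ \sum_a pi h s a = 1.

Definition is_kernel (P : kernel) : Prop :=
  forall h s a, (h < H)%N -> (forall s', 0 <= P h s a s') /\ \sum_s' P h s a s' = 1.

Definition is_distr (mu : S -> R) : Prop := (forall s, 0 <= mu s) /\ \sum_s mu s = 1.

(* Vrem m s = V_{H-m}^pi(s; g, P') (0-based step H-m), i.e. value with m steps to go *)
Fixpoint Vrem (pi : policy) (g : sfun) (P' : kernel) (m : nat) (s : S) : R :=
  match m with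
  | 0 => 0
  | m'.+1 => let h := (H - m'.+1)%N in
      \sum_a pi h s a * (g h s a + \sum_s' P' h s a s' * Vrem pi g P' m' s')
  end.

Definition V1mu (mu : S -> R) (pi : policy) (g : sfun) (P' : kernel) : R :=
  \sum_s mu s * Vrem pi g P' H s.

(* occupancy measure q^pi(s,a,h) = P(S_h = s, A_h = a) under true P from mu *)
Fixpoint dstate (mu : S -> R) (pi : policy) (P : kernel) (h : nat) : S -> R :=
  match h with
  | 0 => mu
  | h'.+1 => fun s' => \sum_s \sum_a dstate mu pi P h' s * pi h' s a * P h' s a s'
  end.
Definition occ (mu : S -> R) (pi : policy) (P : kernel) (h : nat) (s : S) (a : A) : R :=
  dstate mu pi P h s * pi h s a.

Variables (St : nat -> nat -> S) (At : nat -> nat -> A) (Rw Cs : nat -> nat -> R).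

Definition visit (j h : nat) (s : S) (a : A) : bool := (St j h == s) && (At j h == a).

Definition Ncnt (k h : nat) (s : S) (a : A) : nat := \sum_(1 <= j < k) visit j h s a.
Definition Nv (k h : nat) (s : S) (a : A) : R := Num.max ((Ncnt k h s a)%:R) 1.

Definition Phat (k : nat) : kernel := fun h s a s' =>
  (\sum_(1 <= j < k) (visit j h s a && (St j h.+1 == s'))%:R) / Nv k h s a.
Definition rhat (k : nat) : sfun := fun h s a =>
  (\sum_(1 <= j < k | visit j h s a) Rw j h) / Nv k h s a.
Definition chat (k : nat) : sfun := fun h s a =>
  (\sum_(1 <= j < k | visit j h s a) Cs j h) / Nv k h s a.

Variable delta : R.
Definition Zc : R := ln (16 * (#|S|%:R) ^+ 2 * #|A|%:R * H%:R * K%:R / delta).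
Definition beta (k : nat) : sfun := fun h s a => Num.sqrt (Zc / Nv k h s a).
Definition bonus (k : nat) : sfun := fun h s a => (1 + H%:R * #|S|%:R) * beta k h s a.

Definition rtilde (k : nat) : sfun := fun h s a => rhat k h s a + bonus k h s a.
Definition ctilde (k : nat) : sfun := fun h s a => chat k h s a - bonus k h s a.
Definition cund   (k : nat) : sfun := fun h s a => chat k h s a + bonus k h s a.

Variable mu : S -> R.
Definition hatVr (k : nat) (pi : policy) : R :=
  Num.min H%:R (V1mu mu pi (rtilde k) (Phat k)).
Definition hatVc (k : nat) (pi : policy) : R :=
  Num.max 0 (V1mu mu pi (ctilde k) (Phat k)).

Definition deltap : R := delta / (16 * (#|S|%:R) ^+ 2 * #|A|%:R * H%:R).
Definition epsk (k : nat) : R :=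
  5 * (H%:R) ^+ 2 * Num.sqrt ((#|S|%:R) ^+ 3 * #|A|%:R) * (ln (k%:R / deltap) + 1)
    / Num.sqrt (k%:R * ln (k%:R / deltap)).

Variables (tau c0 : R).

Definition Cpp_prop (m : nat) : Prop :=
  forall k, (m <= k)%N -> epsk k <= (tau - c0) / 2.
Definition is_Cpp (C : nat) : Prop :=
  (1 <= C)%N /\ Cpp_prop C /\ forall m, (1 <= m)%N -> (m < C)%N -> ~ Cpp_prop m.

Variable pis : nat -> policy.

(* lamf n = lambda^{n+1} *)
Fixpoint lamf (n : nat) : R :=
  match n with
  | 0 => 0
  | n'.+1 => Num.max 0 (lamf n' + hatVc n'.+1 (pis n'.+1) + epsk n'.+1 - tau)
  end.
Definition lam (k : nat) : R := lamf k.-1.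
Definition eta (k : nat) : R := (tau - c0) * H%:R * Num.sqrt k%:R.
Definition lagr (k : nat) (pi : policy) : R :=
  hatVr k pi - lam k / eta k * (hatVc k pi - tau).

Definition is_OptPessPD : Prop :=
  forall k, (1 <= k <= K)%N ->
    is_policy (pis k) /\
    forall pi, is_policy pi -> lagr k pi <= lagr k (pis k).

Variable P : kernel.
Variables (r c : sfun).

Definition event_G (G : nat -> bool) (delta0 : R) : Prop :=
  forall K', (1 <= K' <= K)%N ->
    let KG : R := (\sum_(1 <= k < K'.+1) G k)%N%:R in
    \sum_(1 <= k < K'.+1) \sum_(h < H) \sum_s \sum_a
        (G k)%:R * occ mu (pis k) P h s a / Nv k h s a
      <= 4 * H%:R * #|S|%:R * #|A|%:R + 2 * H%:R * #|S|%:R * #|A|%:R * ln KG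
         + 4 * ln (2 * H%:R * K%:R / delta0)
    /\
    \sum_(1 <= k < K'.+1) \sum_(h < H) \sum_s \sum_a
        (G k)%:R * occ mu (pis k) P h s a / Num.sqrt (Nv k h s a)
      <= 6 * H%:R * #|S|%:R * #|A|%:R + 2 * H%:R * Num.sqrt (#|S|%:R * #|A|%:R * KG)
         + 2 * H%:R * #|S|%:R * #|A|%:R * ln KG + 5 * ln (2 * H%:R * K%:R / delta0).

Variable pi0 : policy.
Definition G0 (k : nat) : bool :=
  (tau + c0) / 2 <= V1mu mu pi0 (cund k) (Phat k).

Definition goodE : Prop :=
  (forall k h s a s', (1 <= k <= K)%N -> (h < H)%N ->
     [/\ `|r h s a - rhat k h s a| <= beta k h s a,
         `|c h s a - chat k h s a| <= beta k h s a,
         `|Phat k h s a s' - P h s a s'| <= beta k h s a &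
         `|Phat k h s a s' - P h s a s'| <=
            Num.sqrt (2 * P h s a s' * Zc / Nv k h s a) + Zc / (3 * Nv k h s a)])
  /\ event_G (fun _ => true) (delta / 4)
  /\ event_G G0 (delta / 4).

End CMDP.

(* Main.v *)
Require Import Defs.
From HB Require Import structures.
From mathcomp Require Import all_boot all_order all_algebra.
From mathcomp Require Import reals exp.
From mathcomp Require Import ring lra zify.
Import Order.TTheory GRing.Theory Num.Theory.
Local Open Scope ring_scope.

Lemma Vtrue_bounds (R : realType) (S A : finType) (H : nat)
  (P : kernel R S A) (c : sfun R S A) (pi : policy R S A) :
  @is_kernel R S A H P ->
  (forall h s a, (h < H)%N -> 0 <= c h s a <= 1) ->
  @is_policy R S A H pi ->
  forall m, (m <= H)%N -> forall s, 0 <= Vrem H pi c P m s <= m%:R.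
Proof.
move=> hP hc hpi; elim=> [|m IH] hm s /=; first by rewrite lexx.
have hlt : (H - m.+1 < H)%N by lia.
have IH' := IH (ltnW hm).
have [pi0 pi1] := hpi _ s hlt.
apply/andP; split.
  apply: sumr_ge0 => a _; apply: mulr_ge0 => //.
  have := hc _ s a hlt => /andP[c0 _].
  apply: addr_ge0 => //; apply: sumr_ge0 => s' _; apply: mulr_ge0.
    by have [] := hP _ s a hlt.
  by case/andP: (IH' s').
apply: le_trans (_ : \sum_a pi (H - m.+1)%N s a * (m.+1)%:R <= _).
  apply: ler_sum => a _; apply: ler_wpM2l => //.
  have := hc _ s a hlt => /andP[_ c1].
  have [P0 P1] := hP _ s a hlt.
  have : \sum_s' P (H - m.+1)%N s a s' * Vrem H pi c P m s' <= m%:R.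
    apply: le_trans (_ : \sum_s' P (H - m.+1)%N s a s' * m%:R <= _).
      apply: ler_sum => s' _; apply: ler_wpM2l; first exact: P0.
      by case/andP: (IH' s').
    by rewrite -mulr_suml P1 mul1r.
  rewrite -natr1; lra.
by rewrite -mulr_suml pi1 mul1r.
Qed.

Theorem lemmaC1
  (R : realType) (S A : finType) (H K : nat)
  (P : kernel R S A) (r c : sfun R S A) (mu : S -> R)
  (tau delta c0 : R) (pi0 : policy R S A)
  (St : nat -> nat -> S) (At : nat -> nat -> A) (Rw Cs : nat -> nat -> R)
  (pis : nat -> policy R S A) (Cpp : nat) :
  (1 <= H)%N ->
  @is_kernel R S A H P ->
  (forall h s a, (h < H)%N -> 0 <= r h s a <= 1 /\ 0 <= c h s a <= 1) ->
  @is_distr R S mu ->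
  0 < tau <= H%:R ->
  0 < delta < 1 ->
  @is_policy R S A H pi0 ->
  @V1mu R S A H mu pi0 c P = c0 ->
  c0 < tau ->
  @is_Cpp R S A H delta tau c0 Cpp ->
  @is_OptPessPD R S A H K St At Rw Cs delta mu tau c0 pis ->
  @goodE R S A H K St At Rw Cs delta mu tau c0 pis P r c pi0 ->
  forall k : nat, (Cpp <= k <= K)%N ->
  forall pi : policy R S A, @is_policy R S A H pi ->
    @hatVc R S A H K St At Cs delta mu k pi <= @V1mu R S A H mu pi c P.
Proof.
move=> H1 hP hrc hmu _ _ _ _ _ [Cpp1 _] _ [hgood _] k /andP[Ck kK] pi hpi.
have k1 : (1 <= k <= K)%N by apply/andP; split => //; apply: leq_trans Ck.
have hc : forall h s a, (h < H)%N -> 0 <= c h s a <= 1.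
  by move=> h s a hh; case: (hrc h s a hh).
have VB := @Vtrue_bounds R S A H P c pi hP hc hpi.
have Nvpos : forall h s a, 0 < Nv R St At k h s a.
  by move=> h s a; rewrite /Nv lt_max ltr01 orbT.
have Phat0 : forall h s a s', 0 <= Phat R St At k h s a s'.
  move=> h s a s'; rewrite /Phat divr_ge0 //; last exact: ltW.
  by apply: sumr_ge0 => j _; exact: ler0n.
have main : forall m, (m <= H)%N -> forall s,
    Vrem H pi (ctilde H K St At Cs delta k) (Phat R St At k) m s <= Vrem H pi c P m s.
  elim=> [|m IH] hm s /=; first by [].
  have hlt : (H - m.+1 < H)%N by lia.
  have [pip _] := hpi _ s hlt.
  apply: ler_sum => a _; apply: ler_wpM2l => //.
  set h := (H - m.+1)%N.
  have G := fun s' => hgood k h s a s' k1 hlt.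
  set b := beta H K St At delta k h s a in G *.
  have b0 : 0 <= b by rewrite /b /beta sqrtr_ge0.
  have hcb : chat St At Cs k h s a <= c h s a + b.
    have [_ Hc _ _] := G s.
    move: Hc; rewrite ler_norml => /andP[Hc1 _]; lra.
  have S1 : \sum_s' Phat R St At k h s a s' *
      Vrem H pi (ctilde H K St At Cs delta k) (Phat R St At k) m s'
      <= \sum_s' P h s a s' * Vrem H pi c P m s' + \sum_(s' : S) b * H%:R.
    rewrite -big_split /=; apply: ler_sum => s' _.
    have [_ _ Hp _] := G s'.
    have /andP[V0 Vm] := VB m (ltnW hm) s'.
    have VH : Vrem H pi c P m s' <= H%:R by apply: le_trans Vm _; rewrite ler_nat ltnW.
    apply: le_trans (_ : Phat R St At k h s a s' * Vrem H pi c P m s' <= _).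
      by apply: ler_wpM2l => //; apply: IH; apply: ltnW.
    have : (Phat R St At k h s a s' - P h s a s') * Vrem H pi c P m s' <= b * H%:R.
      apply: le_trans (_ : b * Vrem H pi c P m s' <= _); last by apply: ler_wpM2l.
      apply: ler_wpM2r => //; apply: le_trans Hp; exact: ler_norm.
    lra.
  rewrite sumr_const in S1.
  rewrite /ctilde /bonus -/b.
  move: S1; set X := \sum_s' _ * _; set Y := \sum_s' _ * _ => S1.
  have e : (b * H%:R) *+ #|S| = H%:R * #|S|%:R * b by rewrite -mulr_natr; ring.
  rewrite e in S1.
  have : 0 <= H%:R * #|S|%:R * b by rewrite mulr_ge0 // mulr_ge0.
  lra.
rewrite /hatVc ge_max; apply/andP; split.
  rewrite /V1mu; apply: sumr_ge0 => s _; apply: mulr_ge0; first by case: hmu.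
  by case/andP: (VB H (leqnn H) s).
rewrite /V1mu; apply: ler_sum => s _; apply: ler_wpM2l; first by case: hmu.
exact: main.
Qed.
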